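(* Let $n\ge1$ be an integer with $\phi(n)\ge n/2$, and let $\mathcal{D}_{S_1},\mathcal{D}_{S_2}\subseteq\mathcal{D}_{[n]}\setminus\{n\}$. If $\mathrm{Spec}(\mathrm{ICG}(n,\mathcal{D}_{S_1}))=\mathrm{Spec}(\mathrm{ICG}(n,\mathcal{D}_{S_2}))$, then $1\notin\mathcal{D}_{S_1}\triangle\mathcal{D}_{S_2}$.
   Context: Identify $\mathbb{Z}_n$ with $[n]=\{1,\dots,n\}$. For a divisor $d$ of $n$, $G_n(d)=\{j\in[n]:\gcd(j,n)=d\}$; $\mathcal{D}_{[n]}$ is the set of positive divisors of $n$. For $\mathcal{D}\subseteq\mathcal{D}_{[n]}\setminus\{n\}$, $\mathrm{ICG}(n,\mathcal{D})=\mathrm{Cay}(\mathbb{Z}_n,S)$ with $S=\bigcup_{d\in\mathcal{D}}G_n(d)$, and $\mathcal{D}=\mathcal{D}_S$. $\phi$ is Euler's totient function; $\triangle$ denotes symmetric difference; $\mathrm{Spec}$ is the multiset of adjacency eigenvalues. *)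

(* Defs.v *)
From mathcomp Require Import all_boot all_order all_algebra all_field.
Set Implicit Arguments. Unset Strict Implicit. Unset Printing Implicit Defensive.
Import GRing.Theory Num.Theory.
Local Open Scope ring_scope.

(* Z_n is identified with 'I_n = {0,...,n-1}; the residue 0 plays the role of
   n in [n] = {1,...,n}.  Since gcd(0,n) = n, this does not change G_n(d). *)

Definition icg_conn (n : nat) (D : seq nat) : pred nat :=
  [pred j | (j < n)%N && (gcdn j n \in D)].

(* Adjacency matrix of ICG(n, D) = Cay(Z_n, S): x ~ y iff y - x in S. *)
Definition icg_adj (n : nat) (D : seq nat) : 'M[algC]_n :=
  \matrix_(i < n, j < n) ((icg_conn n D ((j + n - i) %% n)%N : bool)%:R).

(* Spectrum of a square complex matrix as a multiset of eigenvalues: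
   the multiplicity function x |-> multiplicity of x as an eigenvalue
   (root of the characteristic polynomial). *)
Definition Spec (n : nat) (A : 'M[algC]_n) : algC -> nat :=
  fun x => mup x (char_poly A).

Definition proper_divisor_set (n : nat) (D : seq nat) : Prop :=
  forall d, d \in D -> (d %| n)%N /\ d <> n.

Definition symdiff (A B : seq nat) : pred nat :=
  [pred x | (x \in A) (+) (x \in B)].

(* Main.v *)
Require Import Defs.
From mathcomp Require Import all_boot all_order all_algebra all_field zify.
Set Implicit Arguments. Unset Strict Implicit. Unset Printing Implicit Defensive.
Import Order.TTheory GRing.Theory Num.Theory.

Lemma modform n i j : (i < n)%N -> (j < n)%N ->
  ((j + n - i) %% n = if (i <= j)%N then j - i else j + n - i)%N.
Proof.
move=> hi hj; case: leqP => h.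
  rewrite (_ : (j + n - i = (j - i) + n)%N); last by lia.
  by rewrite modnDr modn_small //; lia.
by rewrite modn_small //; lia.
Qed.

Lemma sum_shiftL n (F : nat -> nat) (j : 'I_n) :
  (\sum_(i < n) F ((j + n - i) %% n) = \sum_(k < n) F k)%N.
Proof.
have n0 : (0 < n)%N by case: j => /= k; lia.
pose h (i : 'I_n) : 'I_n := Ordinal (ltn_pmod (j + n - i) n0).
have hinj : injective h.
  move=> a b /(congr1 val) /=; rewrite !modform //.
  move=> e; apply/val_inj => /=; move: e; have := ltn_ord a; have := ltn_ord b; have := ltn_ord j; case: (leqP a j); case: (leqP b j); lia.
by rewrite [RHS](reindex_inj hinj).
Qed.

Lemma sum_shiftR n (F : nat -> nat) (i : 'I_n) :
  (\sum_(j < n) F ((j + n - i) %% n) = \sum_(k < n) F k)%N.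
Proof.
have n0 : (0 < n)%N by case: i => /= k; lia.
pose h (j : 'I_n) : 'I_n := Ordinal (ltn_pmod (j + n - i) n0).
have hinj : injective h.
  move=> a b /(congr1 val) /=; rewrite !modform //.
  move=> e; apply/val_inj => /=; move: e; have := ltn_ord a; have := ltn_ord b; have := ltn_ord i; case: (leqP i a); case: (leqP i b); lia.
by rewrite [RHS](reindex_inj hinj).
Qed.

Local Open Scope ring_scope.

Definition ssum n D := (\sum_(k < n) icg_conn n D k)%N.

Lemma colsum n D (j : 'I_n) : \sum_(i < n) icg_adj n D i j = (ssum n D)%:R.
Proof.
rewrite /icg_adj; under eq_bigr do rewrite mxE.
by rewrite -natr_sum (sum_shiftL (fun k => nat_of_bool (icg_conn n D k))).
Qed.

Lemma rowsum n D (i : 'I_n) : \sum_(j < n) icg_adj n D i j = (ssum n D)%:R.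
Proof.
rewrite /icg_adj; under eq_bigr do rewrite mxE.
by rewrite -natr_sum (sum_shiftR (fun k => nat_of_bool (icg_conn n D k))).
Qed.

Lemma eig_deg n D : (0 < n)%N -> eigenvalue (icg_adj n D) (ssum n D)%:R.
Proof.
move=> n0; apply/eigenvalueP; exists (const_mx 1).
  apply/rowP => j; rewrite !mxE -(colsum D j) mulr1.
  by apply: eq_bigr => i _; rewrite mxE mul1r.
apply/eqP => /rowP /(_ (Ordinal n0)); rewrite !mxE => /eqP; by rewrite oner_eq0.
Qed.

Lemma eig_bound n D x : eigenvalue (icg_adj n D) x%:R -> (x <= ssum n D)%N.
Proof.
move=> /eigenvalueP [v hv vn0].
pose A := icg_adj n D.
have Age0 i j : 0 <= A i j by rewrite /A /icg_adj mxE ler0n.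
have hj j : x%:R * `|v 0 j| <= \sum_(i < n) `|v 0 i| * A i j.
  have := congr1 (fun M : 'M_(1,n) => M 0 j) hv; rewrite /= !mxE => e.
  rewrite -[x%:R]normr_nat -normrM -e.
  apply: le_trans (ler_norm_sum _ _ _) _.
  by apply: ler_sum => i _; rewrite normrM (ger0_norm (Age0 i j)).
pose T := \sum_(j < n) `|v 0 j|.
have hT : 0 < T.
  have [j vj] : exists j, v 0 j != 0.
    apply/existsP; apply: contraR vn0 => /existsPn h.
    by apply/eqP/rowP => j; rewrite !mxE; apply/eqP; have := h j; rewrite negbK.
  rewrite /T (bigD1 j) //=; apply: (@lt_le_trans _ _ `|v 0 j|).
    by rewrite normr_gt0.
  by rewrite lerDl sumr_ge0.
have : x%:R * T <= (ssum n D)%:R * T.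
  rewrite /T !mulr_sumr; apply: le_trans (ler_sum _ (fun j _ => hj j)) _.
  rewrite exchange_big /=; apply: ler_sum => i _.
  by rewrite -mulr_sumr rowsum mulrC.
by rewrite ler_pM2r // ler_nat.
Qed.

Lemma ssum_lower n D : 1%N \in D -> (totient n <= ssum n D)%N.
Proof.
move=> h1; rewrite totient_count_coprime big_mkord /ssum; apply: leq_sum => k _.
rewrite /icg_conn inE ltn_ord /= /coprime gcdnC.
by case: eqP => // ->; rewrite h1.
Qed.

Lemma ssum_upper n D : (1 < n)%N -> proper_divisor_set n D -> 1%N \notin D ->
  (ssum n D + totient n + 1 <= n)%N.
Proof.
move=> n1 hD h1.
have n0 : (0 < n)%N by lia.
have e1 : (\sum_(k < n) (val k == 0%N) = 1)%N.
  rewrite (bigD1 (Ordinal n0)) //= big1 //= => k hk.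
  by case: eqP => // k0; case/negP: hk; apply/eqP/val_inj.
rewrite -{}e1 totient_count_coprime big_mkord /ssum -!big_split /=.
apply: (@leq_trans (\sum_(k < n) 1)%N); last by rewrite sum_nat_const card_ord muln1.
apply: leq_sum => k _.
rewrite /icg_conn inE ltn_ord /=.
case: (eqVneq (val k) 0%N) => [->|k0].
  rewrite gcd0n /coprime gcdn0 (negbTE (_ : n != 1%N)) ?addn0; last by lia.
  case hn: (n \in D) => //; by case: (hD _ hn).
rewrite addn0 /coprime gcdnC; case: eqP => [->|_]; first by rewrite (negbTE h1).
by case: (_ \in D).
Qed.

Theorem lemma3p13 (n : nat) (D1 D2 : seq nat) :
  (1 <= n)%N -> (n <= 2 * totient n)%N ->
  proper_divisor_set n D1 -> proper_divisor_set n D2 ->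
  Spec (icg_adj n D1) = Spec (icg_adj n D2) ->
  1%N \notin symdiff D1 D2.
Proof.
move=> n0 ht hD1 hD2 hS.
have key : forall Da Db, proper_divisor_set n Da -> proper_divisor_set n Db ->
    Spec (icg_adj n Da) = Spec (icg_adj n Db) -> 1%N \in Da -> 1%N \in Db.
  move=> Da Db ha hb hs h1a; apply: contraT => h1b.
  have n1 : (1 < n)%N.
    case: (ha _ h1a) => _; lia.
  have ea := eig_deg Da n0.
  have eb : eigenvalue (icg_adj n Db) (ssum n Da)%:R.
    move: ea; rewrite !eigenvalue_root_char -!dvdp_XsubCl.
    rewrite !XsubC_dvd ?monic_neq0 ?char_poly_monic //.
    by have := congr1 (fun f => f (ssum n Da)%:R) hs; rewrite /Spec /= => ->.
  have := eig_bound eb; have := ssum_lower n h1a; have := ssum_upper n1 hb h1b.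
  lia.
rewrite /symdiff inE; apply/negP; case h1: (1%N \in D1); case h2: (1%N \in D2) => //=.
  by rewrite (key _ _ hD1 hD2 hS h1) in h2.
by rewrite (key _ _ hD2 hD1 (esym hS) h2) in h1.
Qed.
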